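(* Let $\lambda\in k$, $\lambda\neq0$. (i) Let $(A,\succ,\prec)$ be a Leibniz-dendriform algebra and $r\in A\otimes A$ such that $S(r)=0$, $r+\tau(r)$ is invariant and $T_{r+\tau(r)}$ is a linear isomorphism (i.e. $(A,\succ,\prec,\Delta_{\succ,r},\Delta_{\prec,r})$ is a factorizable Leibniz-dendriform bialgebra). Define $\omega(x,y)=-\lambda\langle T_{r+\tau(r)}^{-1}(x),y\rangle$ and $P=T_r\omega^\sharp$ (i.e. $P(x)=T_r(\omega^\sharp(x))$). Then $(A,\succ,\prec,P,\omega)$ is a quadratic Rota–Baxter Leibniz-dendriform algebra of weight $\lambda$. (ii) Conversely, let $(A,\succ,\prec,P,\omega)$ be a quadratic Rota–Baxter Leibniz-dendriform algebra of weight $\lambda$, and let $r\in A\otimes A$ be defined by $T_r=P(\omega^\sharp)^{-1}$. Then $S(r)=0$, $r+\tau(r)$ is invariant and $T_{r+\tau(r)}$ is a linear isomorphism; hence $(A,\succ,\prec,\Delta_{\succ,r},\Delta_{\prec,r})$ is a factorizable Leibniz-dendriform bialgebra.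
   Context: $\langle\cdot,\cdot\rangle$ is the natural pairing, $I$ the identity, $\tau(a\otimes b)=b\otimes a$; all spaces finite-dimensional over $k$. A Leibniz-dendriform algebra is a vector space $A$ with bilinear operations $\succ,\prec$ such that, with $x\circ y:=x\succ y+x\prec y$, for all $x,y,z$: $(x\circ y)\succ z=x\succ(y\succ z)-y\succ(x\succ z)$, $y\prec(x\circ z)+(x\succ y)\prec z=x\succ(y\prec z)$, $x\prec(y\circ z)=(x\prec y)\prec z+y\succ(x\prec z)$. Write $x\odot y:=x\succ y+y\prec x$, $x\star y:=x\circ y+y\circ x$; $L_*(x)y=x*y$, $R_*(x)y=y*x$; $L_\odot:=L_\succ+R_\prec$, $L_\star:=L_\circ+R_\circ$. For $r=\sum_ia_i\otimes b_i$: $T_r:A^*\to A$, $\langle T_r(\zeta),\eta\rangle=\langle r,\zeta\otimes\eta\rangle$; $S(r):=\sum_{i,j}\big(a_i\otimes a_j\otimes (b_j\circ b_i)-a_i\otimes (b_i\odot a_j)\otimes b_j-(a_i\succ a_j)\otimes b_i\otimes b_j\big)$. $s\in A\otimes A$ is invariant if for all $x$: $(L_\odot(x)\otimes I-I\otimes R_\circ(x))s=0$ and $(L_\star(x)\otimes I-I\otimes R_\prec(x))\tau(s)=0$. Coboundary maps $\Delta_{\succ,r}(x)=(L_\odot(x)\otimes I-I\otimes R_\circ(x))r$, $\Delta_{\prec,r}(x)=(L_\star(x)\otimes I-I\otimes R_\prec(x))\tau(r)$; the resulting bialgebra is called factorizable when $S(r)=0$, $r+\tau(r)$ is invariant and $T_{r+\tau(r)}$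 is bijective. For a bilinear form $\omega$, $\omega^\sharp:A\to A^*$ is $\langle\omega^\sharp(x),y\rangle=\omega(x,y)$. A quadratic Leibniz-dendriform algebra is one with a non-degenerate symmetric bilinear form $\omega$ with $\omega(x\prec y,z)=\omega(x,y\circ z+z\circ y)$ and $\omega(x\succ y,z)=-\omega(y,x\circ z)$ for all $x,y,z$. A Rota–Baxter operator of weight $\lambda$ on $(A,\succ,\prec)$ is a linear $P$ with $P(x)\succ P(y)=P(P(x)\succ y+x\succ P(y)+\lambda x\succ y)$ and $P(x)\prec P(y)=P(P(x)\prec y+x\prec P(y)+\lambda x\prec y)$. $(A,\succ,\prec,P,\omega)$ is a quadratic Rota–Baxter Leibniz-dendriform algebra of weight $\lambda$ if $(A,\succ,\prec,\omega)$ is quadratic, $P$ is a Rota–Baxter operator of weight $\lambda$, and $\omega(P(x),y)+\omega(x,P(y))+\lambda\omega(x,y)=0$ for all $x,y$. *)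

(* Defs.v *)
(* A = K^n (row vectors 'rV[K]_n with standard basis
   bvec i), A* = K^n with the dual basis, A (x) A = n x n matrices
   (r = \sum_{p,q} r p q  bvec p (x) bvec q), A (x) A (x) A = functions
   'I_n -> 'I_n -> 'I_n -> K (coefficients in the basis). *)
From HB Require Import structures.
From mathcomp Require Import all_boot all_order all_algebra.
Set Implicit Arguments. Unset Strict Implicit. Unset Printing Implicit Defensive.
Import GRing.Theory.
Local Open Scope ring_scope.

Section LD.
Variables (K : fieldType) (n : nat).
Local Notation A := 'rV[K]_n.

Definition bvec (i : 'I_n) : A := delta_mx 0 i.

Definition pairing (zeta x : A) : K := \sum_i zeta 0 i * x 0 i.

Definition bilinear_op (f : A -> A -> A) : Prop :=
  (forall (a : K) x y z, f (a *: x + y) z = a *: f x z + f y z) /\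
  (forall (a : K) x y z, f z (a *: x + y) = a *: f z x + f z y).

Definition lin_map (f : A -> A) : Prop :=
  forall (a : K) x y, f (a *: x + y) = a *: f x + f y.

Definition bilinear_form (w : A -> A -> K) : Prop :=
  (forall (a : K) x y z, w (a *: x + y) z = a * w x z + w y z) /\
  (forall (a : K) x y z, w z (a *: x + y) = a * w z x + w z y).

Definition circ (sc pc : A -> A -> A) x y := sc x y + pc x y.
Definition odot (sc pc : A -> A -> A) x y := sc x y + pc y x.
Definition star (sc pc : A -> A -> A) x y := circ sc pc x y + circ sc pc y x.

Definition LD_algebra (sc pc : A -> A -> A) : Prop :=
  bilinear_op sc /\ bilinear_op pc /\
  (forall x y z, sc (circ sc pc x y) z = sc x (sc y z) - sc y (sc x z)) /\
  (forall x y z, pc y (circ sc pc x z) + pc (sc x y) z = sc x (pc y z)) /\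
  (forall x y z, pc x (circ sc pc y z) = pc (pc x y) z + sc y (pc x z)).

Definition tens (u v : A) : 'M[K]_n := u^T *m v.

Definition tmap (f g : A -> A) (s : 'M[K]_n) : 'M[K]_n :=
  \sum_p \sum_q s p q *: tens (f (bvec p)) (g (bvec q)).

(* tau(s) = s^T ; invariance of s *)
Definition invariant_tensor (sc pc : A -> A -> A) (s : 'M[K]_n) : Prop :=
  forall x : A,
    tmap (odot sc pc x) id s - tmap id (fun y => circ sc pc y x) s = 0 /\
    tmap (star sc pc x) id s^T - tmap id (fun y => pc y x) s^T = 0.

(* T_r : A^* -> A, <T_r zeta, eta> = <r, zeta (x) eta> *)
Definition Tr (r : 'M[K]_n) (zeta : A) : A := zeta *m r.

Definition tens3 (u v w : A) (i j k : 'I_n) : K := u 0 i * v 0 j * w 0 k.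

(* coefficients of S(r) in A (x) A (x) A *)
Definition Sop (sc pc : A -> A -> A) (r : 'M[K]_n) (i j k : 'I_n) : K :=
  \sum_p \sum_q \sum_s \sum_t r p q * r s t *
    ( tens3 (bvec p) (bvec s) (circ sc pc (bvec t) (bvec q)) i j k
    - tens3 (bvec p) (odot sc pc (bvec q) (bvec s)) (bvec t) i j k
    - tens3 (sc (bvec p) (bvec s)) (bvec q) (bvec t) i j k).

Definition S_zero (sc pc : A -> A -> A) (r : 'M[K]_n) : Prop :=
  forall i j k, Sop sc pc r i j k = 0.

Definition factorizable (sc pc : A -> A -> A) (r : 'M[K]_n) : Prop :=
  [/\ S_zero sc pc r, invariant_tensor sc pc (r + r^T) & ((r + r^T) \in unitmx)].

Definition omega_sharp (w : A -> A -> K) (x : A) : A := \row_j w x (bvec j).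

Definition quadratic_LD (sc pc : A -> A -> A) (w : A -> A -> K) : Prop :=
  [/\ LD_algebra sc pc, bilinear_form w,
      (forall x y, w x y = w y x) /\ (forall x, (forall y, w x y = 0) -> x = 0),
      (forall x y z, w (pc x y) z = w x (circ sc pc y z + circ sc pc z y)) &
      (forall x y z, w (sc x y) z = - w y (circ sc pc x z))].

Definition RB_operator (sc pc : A -> A -> A) (P : A -> A) (lam : K) : Prop :=
  [/\ lin_map P,
      (forall x y, sc (P x) (P y) = P (sc (P x) y + sc x (P y) + lam *: sc x y)) &
      (forall x y, pc (P x) (P y) = P (pc (P x) y + pc x (P y) + lam *: pc x y))].

Definition quadratic_RB_LD (sc pc : A -> A -> A) (P : A -> A)
    (w : A -> A -> K) (lam : K) : Prop :=
  [/\ quadratic_LD sc pc w, RB_operator sc pc P lam &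
      (forall x y, w (P x) y + w x (P y) + lam * w x y = 0)].

Definition omega_of (r : 'M[K]_n) (lam : K) (x y : A) : K :=
  - lam * pairing (x *m invmx (r + r^T)) y.

End LD.

(* Main.v *)
Require Import Defs.
From HB Require Import structures.
From mathcomp Require Import all_boot all_order all_algebra.
From mathcomp Require Import ring.
Set Implicit Arguments. Unset Strict Implicit. Unset Printing Implicit Defensive.
Import GRing.Theory.
Local Open Scope ring_scope.


Section Basic.
Variables (K : fieldType) (n : nat).
Local Notation A := 'rV[K]_n.
Implicit Types x y z : A.
Local Notation e := (@bvec K n).

Definition form (M : 'M[K]_n) (x y : A) : K := (x *m M *m y^T) 0 0.
Definition linK (f : A -> K) := forall a x y, f (a *: x + y) = a * f x + f y.

Lemma bvecE i j : e i 0 j = (i == j)%:R.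
Proof. by rewrite /bvec mxE eqxx /= eq_sym. Qed.

Lemma linK0 f : linK f -> f 0 = 0.
Proof.
move=> h; have := h 1 0 0; rewrite scale1r addr0 mul1r => E.
by apply: (addrI (f 0)); rewrite addr0 -E.
Qed.

Lemma linK_sum f (I : Type) (s : seq I) (F : I -> A) : linK f ->
  f (\sum_(i <- s) F i) = \sum_(i <- s) f (F i).
Proof.
move=> h; elim: s => [|a s IH]; first by rewrite !big_nil linK0.
by rewrite !big_cons -[F a]scale1r h mul1r IH scale1r.
Qed.

Lemma linK_expand f x : linK f -> f x = \sum_i x 0 i * f (e i).
Proof.
move=> h; rewrite {1}[x]row_sum_delta linK_sum //.
apply: eq_bigr => i _; by rewrite -[_ *: _]addr0 h linK0 // addr0.
Qed.

Lemma lin0 (f : A -> A) : lin_map f -> f 0 = 0.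
Proof.
move=> h; have := h 1 0 0; rewrite scale1r addr0 scale1r => E.
by apply: (addrI (f 0)); rewrite addr0 -E.
Qed.

Lemma lin_sum (f : A -> A) (I : Type) (s : seq I) (F : I -> A) : lin_map f ->
  f (\sum_(i <- s) F i) = \sum_(i <- s) f (F i).
Proof.
move=> h; elim: s => [|a s IH]; first by rewrite !big_nil lin0.
by rewrite !big_cons -[F a]scale1r h IH !scale1r.
Qed.

Lemma lin_expand (f : A -> A) x : lin_map f -> f x = \sum_i x 0 i *: f (e i).
Proof.
move=> h; rewrite {1}[x]row_sum_delta lin_sum //.
apply: eq_bigr => i _; by rewrite -[_ *: _]addr0 h lin0 // addr0.
Qed.

Lemma linD (f : A -> A) : lin_map f -> forall x y, f (x + y) = f x + f y.
Proof. by move=> h x y; rewrite -{1}[x]scale1r h scale1r. Qed.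
Lemma linZ (f : A -> A) : lin_map f -> forall a x, f (a *: x) = a *: f x.
Proof. by move=> h a x; rewrite -[_ *: x]addr0 h lin0 // addr0. Qed.
Lemma linN (f : A -> A) : lin_map f -> forall x, f (- x) = - f x.
Proof. by move=> h x; rewrite -scaleN1r linZ // scaleN1r. Qed.
Lemma linB (f : A -> A) : lin_map f -> forall x y, f (x - y) = f x - f y.
Proof. by move=> h x y; rewrite linD // linN. Qed.

Lemma linKD f : linK f -> forall x y, f (x + y) = f x + f y.
Proof. by move=> h x y; rewrite -{1}[x]scale1r h mul1r. Qed.
Lemma linKZ f : linK f -> forall a x, f (a *: x) = a * f x.
Proof. by move=> h a x; rewrite -[_ *: x]addr0 h linK0 // addr0. Qed.
Lemma linKN f : linK f -> forall x, f (- x) = - f x.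
Proof. by move=> h x; rewrite -scaleN1r linKZ // mulN1r. Qed.
Lemma linKB f : linK f -> forall x y, f (x - y) = f x - f y.
Proof. by move=> h x y; rewrite linKD // linKN. Qed.

Definition Mf (f : A -> A) : 'M[K]_n := \matrix_(p, j) f (e p) 0 j.

Lemma mulmx_Mf (f : A -> A) b : lin_map f -> b *m Mf f = f b.
Proof.
move=> h; apply/rowP => j; rewrite (lin_expand b h) !mxE summxE.
by apply: eq_bigr => p _; rewrite !mxE.
Qed.

Lemma Mf_id : Mf id = 1%:M.
Proof. by apply/matrixP => i j; rewrite !mxE eqxx eq_sym. Qed.

Lemma tmapE (f g : A -> A) s : tmap f g s = (Mf f)^T *m s *m Mf g.
Proof.
apply/matrixP => i j; rewrite summxE !mxE.
under eq_bigr => p _ do rewrite summxE.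
under [RHS]eq_bigr => q _ do rewrite !mxE big_distrl.
rewrite exchange_big /=; apply: eq_bigr => p _; apply: eq_bigr => q _.
by rewrite !mxE big_ord1 !mxE; ring.
Qed.

Lemma form_bvec M i j : form M (e i) (e j) = M i j.
Proof. by rewrite /form /bvec -rowE trmx_delta -colE !mxE. Qed.

Lemma form_eq M1 M2 : (forall a b, form M1 a b = form M2 a b) -> M1 = M2.
Proof. by move=> h; apply/matrixP => i j; rewrite -!form_bvec h. Qed.

Lemma form_mull M B x y : form M (x *m B) y = form (B *m M) x y.
Proof. by rewrite /form mulmxA. Qed.
Lemma form_mulr M B x y : form M x (y *m B) = form (M *m B^T) x y.
Proof. by rewrite /form trmx_mul !mulmxA. Qed.

Lemma form_linl M z : linK (fun x => form M x z).
Proof. by move=> a x y; rewrite /form !mulmxDl -!scalemxAl !mxE. Qed.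
Lemma form_linr M z : linK (fun x => form M z x).
Proof.
move=> a x y; rewrite /form !mxE mulr_sumr -big_split /=.
by apply: eq_bigr => k _; rewrite !mxE; ring.
Qed.

Lemma form_sym M x y : M^T = M -> form M x y = form M y x.
Proof.
move=> h; rewrite /form.
have -> : (x *m M *m y^T) 0 0 = ((x *m M *m y^T)^T) 0 0 by rewrite [RHS]mxE.
by rewrite !trmx_mul trmxK h mulmxA.
Qed.

Lemma form_addM M1 M2 x y : form (M1 + M2) x y = form M1 x y + form M2 x y.
Proof. by rewrite /form mulmxDr mulmxDl mxE. Qed.
Lemma form_scaleM c M x y : form (c *: M) x y = c * form M x y.
Proof. by rewrite /form -scalemxAr -scalemxAl mxE. Qed.

End Basic.


Section Core.
Variables (K : fieldType) (n : nat).
Local Notation A := 'rV[K]_n.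
Implicit Types x y z a b u v : A.
Local Notation e := (@bvec K n).
Variables (sc pc : A -> A -> A).
Hypotheses (hsc : bilinear_op sc) (hpc : bilinear_op pc).
Local Notation circ := (circ sc pc).
Local Notation odot := (odot sc pc).
Local Notation star := (star sc pc).

Lemma sc_l z : lin_map (sc^~ z). Proof. by move=> a x y; case: hsc => h _; apply: h. Qed.
Lemma sc_r z : lin_map (sc z). Proof. by move=> a x y; case: hsc => _ h; apply: h. Qed.
Lemma pc_l z : lin_map (pc^~ z). Proof. by move=> a x y; case: hpc => h _; apply: h. Qed.
Lemma pc_r z : lin_map (pc z). Proof. by move=> a x y; case: hpc => _ h; apply: h. Qed.

Lemma scDl u v z : sc (u + v) z = sc u z + sc v z. Proof. exact: (linD (sc_l z)). Qed.
Lemma scZl c u z : sc (c *: u) z = c *: sc u z. Proof. exact: (linZ (sc_l z)). Qed.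
Lemma scBl u v z : sc (u - v) z = sc u z - sc v z. Proof. exact: (linB (sc_l z)). Qed.
Lemma scDr u v z : sc z (u + v) = sc z u + sc z v. Proof. exact: (linD (sc_r z)). Qed.
Lemma scZr c u z : sc z (c *: u) = c *: sc z u. Proof. exact: (linZ (sc_r z)). Qed.
Lemma scBr u v z : sc z (u - v) = sc z u - sc z v. Proof. exact: (linB (sc_r z)). Qed.
Lemma pcDl u v z : pc (u + v) z = pc u z + pc v z. Proof. exact: (linD (pc_l z)). Qed.
Lemma pcZl c u z : pc (c *: u) z = c *: pc u z. Proof. exact: (linZ (pc_l z)). Qed.
Lemma pcBl u v z : pc (u - v) z = pc u z - pc v z. Proof. exact: (linB (pc_l z)). Qed.
Lemma pcDr u v z : pc z (u + v) = pc z u + pc z v. Proof. exact: (linD (pc_r z)). Qed.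
Lemma pcZr c u z : pc z (c *: u) = c *: pc z u. Proof. exact: (linZ (pc_r z)). Qed.
Lemma pcBr u v z : pc z (u - v) = pc z u - pc z v. Proof. exact: (linB (pc_r z)). Qed.

Lemma scNl u z : sc (- u) z = - sc u z. Proof. exact: (linN (sc_l z)). Qed.
Lemma scNr u z : sc z (- u) = - sc z u. Proof. exact: (linN (sc_r z)). Qed.
Lemma pcNl u z : pc (- u) z = - pc u z. Proof. exact: (linN (pc_l z)). Qed.
Lemma pcNr u z : pc z (- u) = - pc z u. Proof. exact: (linN (pc_r z)). Qed.

Lemma lin_add (f g : A -> A) : lin_map f -> lin_map g -> lin_map (fun x => f x + g x).
Proof. by move=> hf hg a x y; rewrite hf hg scalerDr; rewrite -!addrA; congr (_ + _); rewrite addrCA. Qed.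
Lemma lin_comp (f g : A -> A) : lin_map f -> lin_map g -> lin_map (fun x => f (g x)).
Proof. by move=> hf hg a x y; rewrite hg hf. Qed.
Lemma lin_mul (M : 'M[K]_n) : lin_map (fun x : A => x *m M).
Proof. by move=> a x y; rewrite mulmxDl scalemxAl. Qed.

Lemma circ_l z : lin_map (circ^~ z). Proof. exact: lin_add (sc_l z) (pc_l z). Qed.
Lemma circ_r z : lin_map (circ z). Proof. exact: lin_add (sc_r z) (pc_r z). Qed.
Lemma odot_r z : lin_map (odot z). Proof. exact: lin_add (sc_r z) (pc_l z). Qed.
Lemma odot_l z : lin_map (odot^~ z). Proof. exact: lin_add (sc_l z) (pc_r z). Qed.
Lemma star_r z : lin_map (star z). Proof. exact: lin_add (circ_r z) (circ_l z). Qed.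

Lemma linK_add (f g : A -> K) : linK f -> linK g -> linK (fun x => f x + g x).
Proof. by move=> hf hg a x y; rewrite hf hg; ring. Qed.
Lemma linK_sub (f g : A -> K) : linK f -> linK g -> linK (fun x => f x - g x).
Proof. by move=> hf hg a x y; rewrite hf hg; ring. Qed.
Lemma linK_comp (f : A -> K) (g : A -> A) : linK f -> lin_map g -> linK (fun x => f (g x)).
Proof. by move=> hf hg a x y; rewrite hg hf. Qed.

Lemma pairingE u v : pairing u v = (u *m v^T) 0 0.
Proof. by rewrite /pairing mxE; apply: eq_bigr => k _; rewrite mxE. Qed.
Lemma pairing_l v : linK (fun u => pairing u v).
Proof. by move=> c x y; rewrite /pairing mulr_sumr -big_split /=; apply: eq_bigr => k _; rewrite !mxE; ring. Qed.
Lemma pairing_r u : linK (pairing u).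
Proof. by move=> c x y; rewrite /pairing mulr_sumr -big_split /=; apply: eq_bigr => k _; rewrite !mxE; ring. Qed.
Lemma pairing_bvec k v : pairing (e k) v = v 0 k.
Proof.
rewrite /pairing (bigD1 k) //= big1 ?addr0; first by rewrite bvecE eqxx mul1r.
by move=> i h; rewrite bvecE eq_sym (negbTE h) mul0r.
Qed.


Variables (W r : 'M[K]_n) (lam : K).
Hypotheses (lam0 : lam != 0) (Wsym : W^T = W) (Wu : W \in unitmx)
  (NW : (r + r^T) *m W = (- lam)%:M).
Variables (w : A -> A -> K) (P : A -> A).
Hypotheses (hw : forall x y, w x y = form W x y) (hP : forall x, P x = x *m W *m r).

Lemma WN : W *m (r + r^T) = (- lam)%:M.
Proof.
have := congr1 trmx NW; rewrite trmx_mul Wsym raddfD /= trmxK addrC tr_scalar_mx.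
by [].
Qed.

Lemma lamN0 : - lam != 0. Proof. by rewrite oppr_eq0. Qed.

Lemma inv_matrix (F G : 'M[K]_n) :
  (F^T *m (r + r^T) - (r + r^T) *m G = 0) <->
  (forall a b, form W a (b *m F) = form W (a *m G) b).
Proof.
split.
  move=> /subr0_eq h.
  have h2 : W *m F^T = G *m W.
    apply: (scalerI lamN0); rewrite -mul_mx_scalar -NW -mul_scalar_mx -WN.
    by rewrite !mulmxA -(mulmxA W F^T) h !mulmxA.
  by move=> a b; rewrite form_mulr form_mull h2.
move=> h; have h2 : W *m F^T = G *m W.
  by apply: form_eq => a b; rewrite -form_mulr -form_mull h.
apply/eqP; rewrite subr_eq0; apply/eqP.
apply: (scalerI lamN0); rewrite -mul_scalar_mx -NW -mul_mx_scalar -WN.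
by rewrite !mulmxA -(mulmxA (r + r^T) W) h2 !mulmxA.
Qed.


Lemma w_linl z : linK (w^~ z).
Proof. by move=> c x y; rewrite !hw; apply: form_linl. Qed.
Lemma w_linr z : linK (w z).
Proof. by move=> c x y; rewrite !hw; apply: form_linr. Qed.
Lemma w_sym x y : w x y = w y x.
Proof. by rewrite !hw form_sym. Qed.

Lemma form_bvec_r M x j : form M x (e j) = (x *m M) 0 j.
Proof. by rewrite /form /bvec trmx_delta -colE !mxE. Qed.

Lemma w_nondeg x : (forall y, w x y = 0) -> x = 0.
Proof.
move=> h; have h0 : x *m W = 0.
  by apply/rowP => j; rewrite -form_bvec_r -hw h mxE.
by rewrite -[x]mulmx1 -(mulmxV Wu) mulmxA h0 mul0mx.
Qed.

Lemma w_nondeg_r x : (forall y, w y x = 0) -> x = 0.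
Proof. by move=> h; apply: w_nondeg => y; rewrite w_sym h. Qed.

Lemma cond_iff (f g : A -> A) : lin_map f -> lin_map g ->
  (tmap f id (r + r^T) - tmap id g (r + r^T) = 0) <-> (forall a b, w a (f b) = w (g a) b).
Proof.
move=> hf hg; rewrite !tmapE Mf_id trmx1 mulmx1 mul1mx inv_matrix.
split => h a b.
  by rewrite !hw -(mulmx_Mf _ hf) -(mulmx_Mf _ hg) h.
by rewrite (mulmx_Mf _ hf) (mulmx_Mf _ hg) -!hw h.
Qed.

Definition Q1 := forall x y z, w (pc x y) z = w x (circ y z + circ z y).
Definition Q2 := forall x y z, w (sc x y) z = - w y (circ x z).

Lemma trN : (r + r^T)^T = r + r^T.
Proof. by rewrite raddfD /= trmxK addrC. Qed.

Lemma inv_iff : invariant_tensor sc pc (r + r^T) <-> Q1 /\ Q2.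
Proof.
rewrite /invariant_tensor trN; split.
  move=> h.
  have C1 x a b : w a (odot x b) = w (circ a x) b.
    by have [/(cond_iff (odot_r x) (circ_l x)) H _] := h x; apply: H.
  have C2 x a b : w a (star x b) = w (pc a x) b.
    by have [_ /(cond_iff (star_r x) (pc_l x)) H] := h x; apply: H.
  have q1 : Q1 by move=> x y z; rewrite -C2.
  split => // x y z.
  have := C1 x z y; rewrite /Defs.odot (linKD (w_linr z)) (w_sym z (pc y x)) q1.
  rewrite (linKD (w_linr y)) (w_sym z) (w_sym (circ z x)) => E.
  by apply: (addIr (w y (circ x z) + w y (circ z x))); rewrite E; ring.
case=> q1 q2 x; split.
  apply/(cond_iff (odot_r x) (circ_l x)) => a b.
  rewrite /Defs.odot (linKD (w_linr a)) (w_sym a) (w_sym a) q2 q1 (linKD (w_linr b)).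
  by rewrite (w_sym (circ a x)); ring.
apply/(cond_iff (star_r x) (pc_l x)) => a b.
by rewrite q1.
Qed.


Lemma wDl u v z : w (u + v) z = w u z + w v z. Proof. exact: (linKD (w_linl z)). Qed.
Lemma wZl c u z : w (c *: u) z = c * w u z. Proof. exact: (linKZ (w_linl z)). Qed.
Lemma wBl u v z : w (u - v) z = w u z - w v z. Proof. exact: (linKB (w_linl z)). Qed.
Lemma wNl u z : w (- u) z = - w u z. Proof. exact: (linKN (w_linl z)). Qed.
Lemma wNr u z : w z (- u) = - w z u. Proof. exact: (linKN (w_linr z)). Qed.
Lemma wDr u v z : w z (u + v) = w z u + w z v. Proof. exact: (linKD (w_linr z)). Qed.
Lemma wZr c u z : w z (c *: u) = c * w z u. Proof. exact: (linKZ (w_linr z)). Qed.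
Lemma wBr u v z : w z (u - v) = w z u - w z v. Proof. exact: (linKB (w_linr z)). Qed.

Lemma P_lin : lin_map P.
Proof. by move=> c x y; rewrite !hP !mulmxDl -!scalemxAl. Qed.
Lemma PD u v : P (u + v) = P u + P v. Proof. exact: (linD P_lin). Qed.
Lemma PZ c u : P (c *: u) = c *: P u. Proof. exact: (linZ P_lin). Qed.
Lemma PN u : P (- u) = - P u. Proof. exact: (linN P_lin). Qed.
Lemma PB u v : P (u - v) = P u - P v. Proof. exact: (linB P_lin). Qed.

Lemma PQ x : x *m W *m r^T = - lam *: x - P x.
Proof.
have := congr1 (mulmx x) WN; rewrite mulmxA mulmxDr mul_mx_scalar -hP => <-.
by rewrite addrAC subrr add0r.
Qed.

Lemma L2 x y : w (P x) y + w x (P y) + lam * w x y = 0.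
Proof.
rewrite !hP !hw -!mulmxA form_mull form_mulr -form_addM trmx_mul Wsym.
have -> : W *m r *m W + W *m (r^T *m W) = W *m (r + r^T) *m W.
  by rewrite mulmxA -mulmxDl -mulmxDr.
by rewrite WN mul_scalar_mx form_scaleM; ring.
Qed.

Lemma F1 a b : w (P a) b = - w a (P b) - lam * w a b.
Proof. by apply: (addIr (w a (P b) + lam * w a b)); rewrite [LHS]addrA L2; ring. Qed.

Lemma wQ x v : w (- lam *: x - P x) v = w x (P v).
Proof. by rewrite wBl wZl F1; ring. Qed.


Definition Phi (zeta eta theta : A) : K :=
  pairing theta (circ (eta *m r) (zeta *m r))
  - pairing eta (odot (zeta *m r) (theta *m r^T))
  - pairing zeta (sc (eta *m r^T) (theta *m r^T)).

Definition D y z := circ (P y) (P z) - P (circ (P y) z + circ y (P z) + lam *: circ y z).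

Lemma pairing_W x v : pairing (x *m W) v = w x v.
Proof. by rewrite pairingE hw. Qed.

Lemma Phi_W (q1 : Q1) (q2 : Q2) x y z : Phi (z *m W) (y *m W) (x *m W) = w x (D y z).
Proof.
rewrite /Phi !pairing_W -!hP !PQ /Defs.odot wDr (w_sym y) (w_sym y) q2 q1 (w_sym z) q2.
rewrite !wQ /D /Defs.circ.
rewrite !(wDr, wNr, wZr, PD, PN, PZ, scDl, scNl, scZl, pcDl, pcNl, pcZl).
ring.
Qed.


Definition RBs := forall x y, sc (P x) (P y) = P (sc (P x) y + sc x (P y) + lam *: sc x y).
Definition RBp := forall x y, pc (P x) (P y) = P (pc (P x) y + pc x (P y) + lam *: pc x y).

Lemma RB_D : RBs -> RBp -> forall y z, D y z = 0.
Proof.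
move=> hs hp y z; rewrite /D /Defs.circ hs hp.
rewrite !(PD, PN, PZ, scalerDr).
by apply/rowP => k; rewrite !mxE; ring.
Qed.

Lemma D_RB (q1 : Q1) (q2 : Q2) : (forall y z, D y z = 0) -> RBs /\ RBp.
Proof.
move=> hD.
have hD' u v : circ (P u) (P v) = P (circ (P u) v + circ u (P v) + lam *: circ u v).
  by apply/subr0_eq; apply: hD.
split=> x y; apply/subr0_eq; apply: w_nondeg => z.
  rewrite !(PD, PN, PZ, wDl, wNl, wZl) !F1 !q2 !F1 hD' /Defs.circ.
  rewrite !(wDr, wNr, wZr, PD, PN, PZ).
  ring.
rewrite !(PD, PN, PZ, wDl, wNl, wZl) !F1 !q1 !F1 !hD' /Defs.circ.
rewrite !(wDr, wNr, wZr, PD, PN, PZ).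
ring.
Qed.


Lemma bvec_same i : e i 0 i = 1. Proof. by rewrite bvecE eqxx. Qed.
Lemma bvec_diff p i : p != i -> e p 0 i = 0. Proof. by move=> h; rewrite bvecE (negbTE h). Qed.
Lemma bvec_mul j (M : 'M[K]_n) t : (e j *m M) 0 t = M j t.
Proof. by rewrite /bvec -rowE mxE. Qed.

Lemma sum4B (F G : 'I_n -> 'I_n -> 'I_n -> 'I_n -> K) :
  \sum_p \sum_q \sum_s \sum_t (F p q s t - G p q s t) =
  \sum_p \sum_q \sum_s \sum_t F p q s t - \sum_p \sum_q \sum_s \sum_t G p q s t.
Proof.
rewrite -sumrB; apply: eq_bigr => p _; rewrite -sumrB; apply: eq_bigr => q _.
rewrite -sumrB; apply: eq_bigr => s _; by rewrite -sumrB.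
Qed.

Lemma Sop_split i j k : Sop sc pc r i j k =
  \sum_p \sum_q \sum_s \sum_t (r p q * r s t * (e p 0 i * e s 0 j * circ (e t) (e q) 0 k))
  - \sum_p \sum_q \sum_s \sum_t (r p q * r s t * (e p 0 i * odot (e q) (e s) 0 j * e t 0 k))
  - \sum_p \sum_q \sum_s \sum_t (r p q * r s t * (sc (e p) (e s) 0 i * e q 0 j * e t 0 k)).
Proof.
rewrite -!sum4B /Sop /tens3; apply: eq_bigr => p _; apply: eq_bigr => q _.
apply: eq_bigr => s _; apply: eq_bigr => t _; ring.
Qed.


Lemma T1_collapse i j (C : 'I_n -> 'I_n -> K) :
  \sum_p \sum_q \sum_s \sum_t (r p q * r s t * (e p 0 i * e s 0 j * C t q))
  = \sum_q \sum_t r i q * r j t * C t q.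
Proof.
rewrite (bigD1 i) //= [X in _ + X]big1 ?addr0; last first.
  move=> p hp; apply: big1 => q _; apply: big1 => s _; apply: big1 => t _.
  by rewrite (bvec_diff hp); ring.
apply: eq_bigr => q _; rewrite (bigD1 j) //= [X in _ + X]big1 ?addr0; last first.
  move=> s hs; apply: big1 => t _; by rewrite (bvec_diff hs); ring.
by apply: eq_bigr => t _; rewrite !bvec_same; ring.
Qed.

Lemma T2_collapse i k (C : 'I_n -> 'I_n -> K) :
  \sum_p \sum_q \sum_s \sum_t (r p q * r s t * (e p 0 i * C q s * e t 0 k))
  = \sum_q \sum_s r i q * r s k * C q s.
Proof.
rewrite (bigD1 i) //= [X in _ + X]big1 ?addr0; last first.
  move=> p hp; apply: big1 => q _; apply: big1 => s _; apply: big1 => t _.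
  by rewrite (bvec_diff hp); ring.
apply: eq_bigr => q _; apply: eq_bigr => s _.
rewrite (bigD1 k) //= [X in _ + X]big1 ?addr0; last first.
  by move=> t ht; rewrite (bvec_diff ht); ring.
by rewrite !bvec_same; ring.
Qed.

Lemma T3_collapse j k (C : 'I_n -> 'I_n -> K) :
  \sum_p \sum_q \sum_s \sum_t (r p q * r s t * (C p s * e q 0 j * e t 0 k))
  = \sum_p \sum_s r p j * r s k * C p s.
Proof.
apply: eq_bigr => p _; rewrite (bigD1 j) //= [X in _ + X]big1 ?addr0; last first.
  move=> q hq; apply: big1 => s _; apply: big1 => t _.
  by rewrite (bvec_diff hq); ring.
apply: eq_bigr => s _; rewrite (bigD1 k) //= [X in _ + X]big1 ?addr0; last first.
  by move=> t ht; rewrite (bvec_diff ht); ring.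
by rewrite !bvec_same; ring.
Qed.


Lemma bil_entry (f : A -> A -> A) : (forall z, lin_map (f^~ z)) -> (forall z, lin_map (f z)) ->
  forall u v k, f u v 0 k = \sum_t \sum_q u 0 t * v 0 q * f (e t) (e q) 0 k.
Proof.
move=> hl hr u v k; have E1 := lin_expand u (hl v); rewrite /= in E1.
rewrite E1 summxE; apply: eq_bigr => t _; rewrite mxE.
have E2 := lin_expand v (hr (e t)); rewrite /= in E2.
rewrite E2 summxE mulr_sumr; apply: eq_bigr => q _; rewrite mxE; ring.
Qed.

Lemma Sop_Phi i j k : Sop sc pc r i j k = Phi (e i) (e j) (e k).
Proof.
rewrite Sop_split (T1_collapse i j (fun t q => circ (e t) (e q) 0 k)).
rewrite (T2_collapse i k (fun q s => odot (e q) (e s) 0 j)).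
rewrite (T3_collapse j k (fun p s => sc (e p) (e s) 0 i)).
rewrite /Phi !pairing_bvec (bil_entry circ_l circ_r) (bil_entry odot_l odot_r) (bil_entry sc_l sc_r).
rewrite exchange_big /=.
congr (_ - _ - _); apply: eq_bigr => a _; apply: eq_bigr => b _;
  by rewrite !bvec_mul !mxE; ring.
Qed.


Lemma pairDr u v t : pairing t (u + v) = pairing t u + pairing t v. Proof. exact: (linKD (pairing_r t)). Qed.
Lemma pairZr c u t : pairing t (c *: u) = c * pairing t u. Proof. exact: (linKZ (pairing_r t)). Qed.
Lemma pairNr u t : pairing t (- u) = - pairing t u. Proof. exact: (linKN (pairing_r t)). Qed.
Lemma pairDl u v t : pairing (u + v) t = pairing u t + pairing v t. Proof. exact: (linKD (pairing_l t)). Qed.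
Lemma pairZl c u t : pairing (c *: u) t = c * pairing u t. Proof. exact: (linKZ (pairing_l t)). Qed.

Lemma mulDZ c a b (M : 'M[K]_n) : (c *: a + b) *m M = c *: (a *m M) + b *m M.
Proof. by rewrite mulmxDl scalemxAl. Qed.

Lemma Phi_l eta theta : linK (fun zeta => Phi zeta eta theta).
Proof.
move=> c a b; rewrite /Phi /Defs.odot /Defs.circ !mulDZ.
rewrite !(scDl, scDr, scZl, scZr, pcDl, pcDr, pcZl, pcZr, pairDr, pairZr, pairDl, pairZl).
ring.
Qed.
Lemma Phi_m zeta theta : linK (fun eta => Phi zeta eta theta).
Proof.
move=> c a b; rewrite /Phi /Defs.odot /Defs.circ !mulDZ.
rewrite !(scDl, scDr, scZl, scZr, pcDl, pcDr, pcZl, pcZr, pairDr, pairZr, pairDl, pairZl).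
ring.
Qed.
Lemma Phi_r zeta eta : linK (fun theta => Phi zeta eta theta).
Proof.
move=> c a b; rewrite /Phi /Defs.odot /Defs.circ !mulDZ.
rewrite !(scDl, scDr, scZl, scZr, pcDl, pcDr, pcZl, pcZr, pairDr, pairZr, pairDl, pairZl).
ring.
Qed.

Lemma Phi_expand : (forall i j k, Phi (e i) (e j) (e k) = 0) ->
  forall zeta eta theta, Phi zeta eta theta = 0.
Proof.
move=> h zeta eta theta.
have E1 := linK_expand zeta (Phi_l eta theta); rewrite /= in E1.
rewrite E1; apply: big1 => i _.
have E2 := linK_expand eta (Phi_m (e i) theta); rewrite /= in E2.
rewrite E2 big1 ?mulr0 // => j _.
have E3 := linK_expand theta (Phi_r (e i) (e j)); rewrite /= in E3.
by rewrite E3 big1 ?mulr0 // => k _; rewrite h mulr0.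
Qed.

Lemma S_iff (q1 : Q1) (q2 : Q2) : S_zero sc pc r <-> (forall y z, D y z = 0).
Proof.
split.
  move=> h y z; apply: w_nondeg_r => x; rewrite -Phi_W //.
  by apply: Phi_expand => i j k; rewrite -Sop_Phi; apply: h.
move=> h i j k; rewrite Sop_Phi.
rewrite -[e i](mulmxKV Wu) -[e j](mulmxKV Wu) -[e k](mulmxKV Wu) Phi_W // h.
exact: (linK0 (w_linr _)).
Qed.


Lemma core_i : LD_algebra sc pc -> invariant_tensor sc pc (r + r^T) -> S_zero sc pc r ->
  quadratic_RB_LD sc pc P w lam.
Proof.
move=> hLD /inv_iff [q1 q2] hS.
have [hs hp] := D_RB q1 q2 ((S_iff q1 q2).1 hS).
split.
- split => //.
  + by split; [move=> c x y z; apply: w_linl | move=> c x y z; apply: w_linr].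
  + split; first exact: w_sym.
    exact: w_nondeg.
- by split; [exact: P_lin | exact: hs | exact: hp].
- exact: L2.
Qed.

Lemma core_ii : quadratic_RB_LD sc pc P w lam -> factorizable sc pc r.
Proof.
case=> [[_ _ _ q1 q2] [_ hs hp] _].
have q12 : Q1 /\ Q2 by [].
split.
- by apply/(S_iff q1 q2); apply: RB_D.
- by apply/inv_iff.
- have h : (r + r^T) *m ((- lam)^-1 *: W) = 1%:M.
    rewrite -scalemxAr NW; apply/matrixP => a b; rewrite !mxE.
    by case: (a == b); rewrite ?mulr1n ?mulr0n ?mulr0 // mulVf // lamN0.
  by case: (mulmx1_unit h).
Qed.

End Core.


Section Final.
Variables (K : fieldType) (n : nat).
Local Notation A := 'rV[K]_n.
Local Notation e := (@bvec K n).

Lemma sharpE (w : A -> A -> K) (W : 'M[K]_n) :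
  (forall x y, w x y = form W x y) -> forall x, omega_sharp w x = x *m W.
Proof. by move=> hw x; apply/rowP => j; rewrite mxE hw form_bvec_r. Qed.

Lemma form0 (x y : A) : form 0 x y = 0.
Proof. by rewrite /form mulmx0 mul0mx mxE. Qed.

Lemma part_i (lam : K) : lam != 0 ->
  forall (sc pc : A -> A -> A) (r : 'M[K]_n),
      LD_algebra sc pc -> factorizable sc pc r ->
      quadratic_RB_LD sc pc
        (fun x => Tr r (omega_sharp (omega_of r lam) x))
        (omega_of r lam) lam.
Proof.
move=> lam0 sc pc r hLD [hS hinv hNu].
have [hsc [hpc _]] := hLD.
pose W := - lam *: invmx (r + r^T).
have Wsym : W^T = W.
  have T : (invmx (r + r^T))^T = invmx (r + r^T).
    by rewrite trmx_inv raddfD /= trmxK addrC.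
  apply/matrixP => a b; rewrite /W !mxE; congr (_ * _).
  by move/matrixP: T => /(_ a b); rewrite mxE.
have Wu : W \in unitmx by rewrite unitmxZ ?unitfE ?oppr_eq0 // unitmx_inv.
have NW : (r + r^T) *m W = (- lam)%:M by rewrite /W -scalemxAr mulmxV // scalemx1.
have hw : forall x y, omega_of r lam x y = form W x y.
  by move=> x y; rewrite /omega_of pairingE /form /W -scalemxAr -scalemxAl [RHS]mxE.
have hP : forall x, (fun x => Tr r (omega_sharp (omega_of r lam) x)) x = x *m W *m r.
  by move=> x; rewrite /Tr (sharpE hw).
exact: (core_i hsc hpc lam0 Wsym Wu NW hw hP hLD hinv hS).
Qed.

Lemma part_ii (lam : K) : lam != 0 ->
  forall (sc pc : A -> A -> A) (P : A -> A) (w : A -> A -> K) (r : 'M[K]_n),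
      quadratic_RB_LD sc pc P w lam ->
      (forall x, Tr r (omega_sharp w x) = P x) ->
      factorizable sc pc r.
Proof.
move=> lam0 sc pc P w r hQ hTr.
have [[hLD [wl wr] [wsym wnd] q1 q2] [Plin hs hp] hL2] := hQ.
have [hsc [hpc _]] := hLD.
pose W := \matrix_(i, j) w (e i) (e j).
have hw : forall x y, w x y = form W x y.
  move=> x y.
  have E1 : w x y = \sum_i x 0 i * w (e i) y.
    by apply: (linK_expand x (f := fun x => w x y)) => a u v; apply: wl.
  have E2 : form W x y = \sum_i x 0 i * form W (e i) y.
    exact: (linK_expand x (form_linl W y)).
  rewrite E1 E2; apply: eq_bigr => i _; congr (_ * _).
  have E3 : w (e i) y = \sum_j y 0 j * w (e i) (e j).
    by apply: (linK_expand y (f := fun y => w (e i) y)) => a u v; apply: wr.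
  have E4 : form W (e i) y = \sum_j y 0 j * form W (e i) (e j).
    exact: (linK_expand y (form_linr W (e i))).
  by rewrite E3 E4; apply: eq_bigr => j _; rewrite form_bvec mxE.
have Wsym : W^T = W by apply/matrixP => i j; rewrite !mxE wsym.
have Wu : W \in unitmx.
  rewrite unitmxE unitfE; apply/negP => /det0P [v vn0 hv].
  have : v = 0 by apply: wnd => y; rewrite hw /form hv mul0mx mxE.
  by move/eqP; rewrite (negbTE vn0).
have hP : forall x, P x = x *m W *m r by move=> x; rewrite -hTr /Tr (sharpE hw).
have M0 : W *m r *m W + W *m (r^T *m W) + lam *: W = 0.
  apply: form_eq => x y; rewrite form0 !form_addM form_scaleM -hw.
  have -> : form (W *m r *m W) x y = w (P x) y by rewrite hP hw -(mulmxA x) form_mull.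
  have -> : form (W *m (r^T *m W)) x y = w x (P y).
    by rewrite hP hw -(mulmxA y) form_mulr trmx_mul Wsym.
  exact: hL2.
have H : W *m ((r + r^T) *m W + lam%:M) = 0.
  rewrite -M0 mulmxDr mul_mx_scalar mulmxA mulmxDr mulmxDl.
  by rewrite !mulmxA.
have NW : (r + r^T) *m W = (- lam)%:M.
  have := congr1 (mulmx (invmx W)) H; rewrite mulKmx // mulmx0 => /eqP.
  by rewrite addr_eq0 raddfN => /eqP.
exact: (core_ii hsc hpc lam0 Wsym Wu NW hw hP hQ).
Qed.

End Final.

Theorem mainTheorem17 (K : fieldType) (n : nat) (lam : K) :
  lam != 0 ->
  (forall (sc pc : 'rV[K]_n -> 'rV[K]_n -> 'rV[K]_n) (r : 'M[K]_n),
      LD_algebra sc pc -> factorizable sc pc r ->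
      quadratic_RB_LD sc pc
        (fun x => Tr r (omega_sharp (omega_of r lam) x))
        (omega_of r lam) lam)
  /\
  (forall (sc pc : 'rV[K]_n -> 'rV[K]_n -> 'rV[K]_n) (P : 'rV[K]_n -> 'rV[K]_n)
          (w : 'rV[K]_n -> 'rV[K]_n -> K) (r : 'M[K]_n),
      quadratic_RB_LD sc pc P w lam ->
      (forall x, Tr r (omega_sharp w x) = P x) ->
      factorizable sc pc r).
Proof.
move=> lam0; split; [exact: (part_i lam0) | exact: (part_ii lam0)].
Qed.
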